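(* Let $G$ be an edge-colored graph of order $n\geq3$. If $e(G)+c(G)\geq\binom{n+1}{2}$ and $G$ contains exactly one rainbow triangle, then $e(G)+c(G)=\binom{n+1}{2}$ and $G$ is complete.
   Context: An edge-colored graph is a finite simple graph $G$ with a map $C:E(G)\to\mathbb{N}$. $e(G)=|E(G)|$, $c(G)$ is the number of distinct colors appearing on $E(G)$. A subgraph is rainbow if all its edges have distinct colors. *)

(* Defs.v *)
From mathcomp Require Import all_boot.
Set Implicit Arguments. Unset Strict Implicit. Unset Printing Implicit Defensive.

(* A finite simple graph on vertex type V : finType is given by its edge set
   E : {set {set V}}, every edge being a 2-element subset of V.
   An edge-coloring is a map C : {set V} -> nat (only its values on E matter). *)

Definition simple_graph (V : finType) (E : {set {set V}}) : Prop :=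
  forall e, e \in E -> #|e| = 2.

Definition num_edges (V : finType) (E : {set {set V}}) : nat := #|E|.

Definition num_colors (V : finType) (E : {set {set V}}) (C : {set V} -> nat) : nat :=
  size (undup [seq C e | e <- enum E]).

Definition edges_in (V : finType) (E : {set {set V}}) (S : {set V}) : {set {set V}} :=
  [set e in E | e \subset S].

Definition is_triangle (V : finType) (E : {set {set V}}) (S : {set V}) : bool :=
  (#|S| == 3) && [forall x in S, forall y in S, (x != y) ==> ([set x; y] \in E)].

Definition rainbow_triangle (V : finType) (E : {set {set V}}) (C : {set V} -> nat)
    (S : {set V}) : bool :=
  is_triangle E S && uniq [seq C e | e <- enum (edges_in E S)].

Definition rainbow_triangles (V : finType) (E : {set {set V}}) (C : {set V} -> nat)
    : {set {set V}} := [set S | rainbow_triangle E C S].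

Definition complete_graph (V : finType) (E : {set {set V}}) : Prop :=
  forall x y : V, x != y -> [set x; y] \in E.

(* Main.v *)
Require Import Defs.
From mathcomp Require Import all_boot zify.
Set Implicit Arguments. Unset Strict Implicit. Unset Printing Implicit Defensive.

Lemma edge_neq (V : finType) (E : {set {set V}}) a b :
  simple_graph E -> [set a; b] \in E -> a != b.
Proof.
move=> HE /HE; apply: contraPneq => ->; rewrite setUid cards1.
by [].
Qed.

Lemma two_pts (V : finType) (e : {set V}) u :
  #|e| = 2 -> u \in e -> exists w, w != u /\ e = [set u; w].
Proof.
move/eqP/cards2P => [p [q [pq ->]]]; rewrite !inE => /orP [] /eqP ->.
  by exists q; split; rewrite // eq_sym.
by exists p; split; rewrite // setUC.
Qed.

Lemma card3_tri (V : finType) (T : {set V}) :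
  #|T| = 3 -> exists a b c, [/\ a != b, a != c, b != c & T = [set a; b; c]].
Proof.
move=> T3; have : 0 < #|T| by rewrite T3.
case/card_gt0P => a aT.
have : #|T :\ a| == 2 by move: T3; rewrite (cardsD1 a) aT add1n => -[->].
case/cards2P => b [c [bc Hbc]].
have : b \in T :\ a by rewrite Hbc !inE eqxx.
have : c \in T :\ a by rewrite Hbc !inE eqxx orbT.
rewrite !inE => /andP [ca _] /andP [ba _].
exists a, b, c; split; [by rewrite eq_sym | by rewrite eq_sym | done |].
by rewrite -setUA -Hbc setD1K.
Qed.

Lemma edges_tri (V : finType) (E : {set {set V}}) a b c :
  simple_graph E -> a != b -> a != c -> b != c ->
  [set a; b] \in E -> [set a; c] \in E -> [set b; c] \in E ->
  edges_in E [set a; b; c] = [set [set a; b]; [set a; c]; [set b; c]].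
Proof.
move=> HE ab ac bc Eab Eac Ebc; apply/setP => e; rewrite !inE.
apply/idP/idP.
  case/andP => eE sub.
  have /cards2P [p [q [pq ep]]] : #|e| == 2 by rewrite HE.
  subst e.
  have := subsetP sub p; have := subsetP sub q; rewrite !inE !eqxx ?orbT.
  move=> Hq Hp; move: (Hp isT) (Hq isT) pq => {Hp Hq}.
  by move=> /orP [/orP [] | ] /eqP -> /orP [/orP [] | ] /eqP ->;
    rewrite ?eqxx // => _; rewrite ?orbT // setUC eqxx ?orbT.
move=> /orP [/orP [] | ] /eqP ->; rewrite ?Eab ?Eac ?Ebc /=;
  apply/subsetP => x; rewrite !inE => /orP [] ->; rewrite ?orbT //.
Qed.

Lemma set_ne (V : finType) (x : V) (A B : {set V}) :
  x \in A -> x \notin B -> A != B.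
Proof. by move=> H1 H2; apply/negP => /eqP E1; move: H2; rewrite -E1 H1. Qed.

Lemma rainbow_tri (V : finType) (E : {set {set V}}) (C : {set V} -> nat) a b c :
  simple_graph E -> a != b -> a != c -> b != c ->
  [set a; b] \in E -> [set a; c] \in E -> [set b; c] \in E ->
  rainbow_triangle E C [set a; b; c] =
  [&& C [set a; b] != C [set a; c], C [set a; b] != C [set b; c]
    & C [set a; c] != C [set b; c]].
Proof.
move=> HE ab ac bc Eab Eac Ebc.
rewrite /rainbow_triangle.
have -> : is_triangle E [set a; b; c].
  apply/andP; split.
    by rewrite -setUA !cardsU1 cards1 !inE (negbTE ab) (negbTE ac) (negbTE bc).
  apply/forallP => x; apply/implyP; rewrite !inE => Hx.
  apply/forallP => y; apply/implyP; rewrite !inE => Hy; apply/implyP.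
  move: Hx Hy => /orP [/orP [] | ] /eqP -> /orP [/orP [] | ] /eqP ->;
    rewrite ?eqxx // => _; by rewrite // setUC.
have U : uniq [:: [set a; b]; [set a; c]; [set b; c]].
  rewrite /= !inE !negb_or andbT.
  rewrite (@set_ne _ b) ?(@set_ne _ a) ?inE ?eqxx ?orbT // negb_or ?(negbTE ab) ?(negbTE ac) // eq_sym.
  by rewrite ab.
have M : enum (edges_in E [set a; b; c]) =i [:: [set a; b]; [set a; c]; [set b; c]].
  by move=> e; rewrite mem_enum edges_tri // !inE orbA.
rewrite /= (perm_uniq (perm_map C (uniq_perm (enum_uniq _) U M))) /=.
by rewrite !inE !negb_or andbT andbA.
Qed.

Definition colset (V : finType) (N : nat) (F : {set {set V}}) (C : {set V} -> nat)
  : {set 'I_N} := [set i : 'I_N | [exists e in F, C e == i]].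

Definition nb (V : finType) (E : {set {set V}}) (S : {set V}) u : {set V} :=
  [set w in S | (w != u) && ([set u; w] \in E)].

Definition priv (V : finType) (E : {set {set V}}) C N (S : {set V}) u : {set 'I_N} :=
  colset N (edges_in E S) C :\: colset N (edges_in E (S :\ u)) C.

Definition cplt (V : finType) (E : {set {set V}}) (S : {set V}) :=
  [forall x in S, forall y in S, (x != y) ==> ([set x; y] \in E)].

Definition pk (V : finType) (E : {set {set V}}) (C : {set V} -> nat) (S : {set V}) v (i : nat) :=
  odflt v [pick w in S | (w != v) && ([set v; w] \in E) && (C [set v; w] == i)].

Lemma col_mem (V : finType) N (F : {set {set V}}) (C : {set V} -> nat) e (i : 'I_N) :
  e \in F -> C e = i -> i \in colset N F C.
Proof. by move=> eF Ce; rewrite inE; apply/existsP; exists e; rewrite eF Ce eqxx. Qed.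

Lemma num_colorsE (V : finType) (F : {set {set V}}) C N :
  (forall e, e \in F -> C e < N) -> num_colors F C = #|colset N F C|.
Proof.
move=> HN; rewrite /num_colors cardE -(size_map val).
apply: perm_size; apply: uniq_perm.
- exact: undup_uniq.
- by rewrite map_inj_uniq ?enum_uniq //; apply: val_inj.
move=> x; rewrite mem_undup; apply/mapP/mapP.
  case=> e; rewrite mem_enum => eF ->.
  exists (Ordinal (HN e eF)) => //; rewrite mem_enum.
  by rewrite inE; apply/existsP; exists e; rewrite eF /=.
case=> i; rewrite mem_enum inE => /existsP [e /andP [eF /eqP Ce]] ->.
by exists e; rewrite ?mem_enum.
Qed.

Lemma edges_sub (V : finType) (E : {set {set V}}) (S1 S2 : {set V}) :
  S1 \subset S2 -> edges_in E S1 \subset edges_in E S2.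
Proof.
move=> s12; apply/subsetP => e; rewrite !inE => /andP [-> s]; exact: subset_trans s s12.
Qed.

Lemma colset_sub (V : finType) N C (F1 F2 : {set {set V}}) :
  F1 \subset F2 -> colset N F1 C \subset colset N F2 C.
Proof.
move=> s12; apply/subsetP => i; rewrite !inE => /existsP [e /andP [eF Ce]].
by apply/existsP; exists e; rewrite (subsetP s12 _ eF).
Qed.

Lemma L_cols (V : finType) (E : {set {set V}}) C N (S : {set V}) u :
  #|colset N (edges_in E S) C| =
  #|colset N (edges_in E (S :\ u)) C| + #|priv E C N S u|.
Proof.
rewrite /priv -(cardsID (colset N (edges_in E (S :\ u)) C) (colset N (edges_in E S) C)).
congr (_ + _); rewrite (setIidPr _) //.
by apply: colset_sub; apply: edges_sub; exact: subsetDl.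
Qed.

Lemma L_edges (V : finType) (E : {set {set V}}) (S : {set V}) u :
  simple_graph E -> u \in S ->
  #|edges_in E S| <= #|edges_in E (S :\ u)| + #|nb E S u|.
Proof.
move=> HE uS.
apply: leq_trans (leq_trans _ (leq_card_setU _ _)) (leq_add (leqnn _) (leq_imset_card (fun w => [set u; w]) (nb E S u))).
apply: subset_leq_card; apply/subsetP => e; rewrite inE => /andP [eE eS].
rewrite in_setU; case ue: (u \in e).
  have [w [wu ew]] := two_pts (HE e eE) ue.
  apply/orP; right; apply/imsetP; exists w => //.
  by rewrite inE (subsetP eS) // ?wu -?ew ?eE // ew !inE eqxx orbT.
apply/orP; left; rewrite inE eE; apply/subsetP => x xe.
rewrite inE (subsetP eS) // andbT. by rewrite inE; apply: contraFN ue => /eqP <-.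
Qed.

Lemma L_pk (V : finType) (E : {set {set V}}) C N (S : {set V}) v (i : 'I_N) :
  simple_graph E -> v \in S -> i \in priv E C N S v ->
  [/\ pk E C S v i \in S, pk E C S v i != v, [set v; pk E C S v i] \in E
    & C [set v; pk E C S v i] = i].
Proof.
move=> HE vS Pi; move: (Pi); rewrite inE => /andP [ni].
rewrite inE => /existsP [e /andP [eES /eqP Ce]]; rewrite /pk.
case: pickP => [w | none] /=.
  by move=> /andP [wS /andP [/andP [wv Ew] /eqP Cw]].
exfalso; move: eES; rewrite inE => /andP [eE eS].
case ve: (v \in e); last first.
  case/negP: ni; rewrite inE; apply/existsP; exists e; rewrite Ce eqxx andbT.
  rewrite inE eE; apply/subsetP => x xe.
  by rewrite !inE (subsetP eS) // andbT; apply: contraFN ve => /eqP <-.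
have [w [wv ew]] := two_pts (HE e eE) ve.
have := none w; rewrite wv -ew eE Ce eqxx (subsetP eS) // ew !inE eqxx orbT.
by [].
Qed.

Lemma L_NA (V : finType) (E : {set {set V}}) C N (S : {set V}) (v : V) (i j : 'I_N) :
  simple_graph E -> (forall T : {set V}, T \subset S -> ~~ rainbow_triangle E C T) ->
  v \in S -> i \in priv E C N S v -> j \in priv E C N S v -> i != j ->
  [set pk E C S v i; pk E C S v j] \notin E.
Proof.
move=> HE HR vS Pi Pj ij.
have [aS av Eva Ca] := L_pk HE vS Pi.
have [bS bv Evb Cb] := L_pk HE vS Pj.
move: aS av Eva Ca bS bv Evb Cb.
set a := pk E C S v i; set b := pk E C S v j.
move=> aS av Eva Ca bS bv Evb Cb.
apply/negP => Eab.
have ab : a != b.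
  apply: contra ij => /eqP ab; apply/eqP; apply: val_inj; by rewrite /= -Ca -Cb ab.
have eS' : [set a; b] \in edges_in E (S :\ v).
  rewrite inE Eab; apply/subsetP => x; rewrite !inE => /orP [] /eqP ->.
    by rewrite av aS.
  by rewrite bv bS.
have Cai : C [set a; b] != i.
  apply/negP => /eqP H; move: Pi; rewrite inE (col_mem eS' H) //.
have Cbj : C [set a; b] != j.
  apply/negP => /eqP H; move: Pj; rewrite inE (col_mem eS' H) //.
apply: (negP (HR [set v; a; b] _)).
  by apply/subsetP => x; rewrite !inE => /orP [/orP []|] /eqP ->.
rewrite rainbow_tri // 1?eq_sym // Ca Cb.
rewrite !(eq_sym _ (C _)) Cai Cbj !andbT.
by apply: contra ij => /eqP H; apply/eqP; apply: val_inj.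
Qed.

Lemma pk_inj (V : finType) (E : {set {set V}}) C N (S : {set V}) (v : V) (i j : 'I_N) :
  simple_graph E -> v \in S -> i \in priv E C N S v -> j \in priv E C N S v -> i != j ->
  pk E C S v i != pk E C S v j.
Proof.
move=> HE vS Pi Pj ij.
have [_ _ _ Ca] := L_pk HE vS Pi.
have [_ _ _ Cb] := L_pk HE vS Pj.
apply: contra ij => /eqP ab; apply/eqP; apply: val_inj; by rewrite /= -Ca -Cb ab.
Qed.

Lemma L_priv1 (V : finType) (E : {set {set V}}) C N (S : {set V}) (u : V) :
  simple_graph E -> (forall T : {set V}, T \subset S -> ~~ rainbow_triangle E C T) ->
  u \in S -> cplt E (S :\ u) -> #|priv E C N S u| <= 1.
Proof.
move=> HE HR uS Hc; rewrite leqNgt; apply/negP => /card_gt1P [i [j [Pi Pj ij]]].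
have [aS av _ _] := L_pk HE uS Pi.
have [bS bv _ _] := L_pk HE uS Pj.
have ab := pk_inj HE uS Pi Pj ij.
move/forallP/(_ (pk E C S u i))/implyP: Hc; rewrite !inE av aS => /(_ isT).
move/forallP/(_ (pk E C S u j))/implyP; rewrite !inE bv bS => /(_ isT).
rewrite ab /= => Eab.
by move: (L_NA HE HR uS Pi Pj ij); rewrite Eab.
Qed.

Lemma nb_sub (V : finType) (E : {set {set V}}) (S : {set V}) u :
  nb E S u \subset S :\ u.
Proof. by apply/subsetP => w; rewrite !inE => /andP [-> /andP [-> _]]. Qed.

Lemma L_sel (V : finType) (E : {set {set V}}) C N (S : {set V}) :
  simple_graph E -> (forall T : {set V}, T \subset S -> ~~ rainbow_triangle E C T) ->
  0 < #|S| ->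
  exists2 u, u \in S & #|nb E S u| + #|priv E C N S u| <= #|S|.
Proof.
move=> HE HR /card_gt0P [v0 v0S].
case: (arg_maxnP (fun v => #|priv E C N S v|) v0S) => v vS0 vmax.
have vS : v \in S := vS0.
case: (leqP #|priv E C N S v| 1) => hP.
  exists v => //.
  have := subset_leq_card (nb_sub E S v).
  have : #|S| = (#|S :\ v|).+1 by rewrite (cardsD1 v S) vS.
  move=> -> h; rewrite -addn1; exact: leq_add h hP.
have [i0 Pi0] : exists i0, i0 \in priv E C N S v.
  by apply/card_gt0P; apply: leq_trans hP.
have [uS uv Evu Cu] := L_pk HE vS Pi0.
exists (pk E C S v i0) => //.
set u := pk E C S v i0.
set A := [set pk E C S v i | i : 'I_N in priv E C N S v].
have cA : #|A| = #|priv E C N S v|.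
  apply: card_in_imset => i j Pi Pj /eqP; apply: contraTeq => ij.
  exact: pk_inj.
have AS : A \subset S.
  by apply/subsetP => x /imsetP [i Pi ->]; have [] := L_pk HE vS Pi.
have nbA : nb E S u \subset S :\: A.
  apply/subsetP => w; rewrite !inE => /andP [wS /andP [wu Euw]]; rewrite wS andbT.
  apply/negP => /imsetP [j Pj wj].
  have ij : i0 != j by apply: contra wu => /eqP ij; rewrite wj -ij.
  by move: (L_NA HE HR vS Pi0 Pj ij); rewrite -/u -wj Euw.
have := subset_leq_card nbA.
rewrite cardsD (setIidPr AS) cA.
have := vmax _ uS.
have := subset_leq_card AS; rewrite cA.
rewrite /geq -/u; lia.
Qed.

Lemma claimA (V : finType) (E : {set {set V}}) (C : {set V} -> nat) N :
  simple_graph E -> forall n (S : {set V}), #|S| = n.+1 ->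
  (forall T : {set V}, T \subset S -> ~~ rainbow_triangle E C T) ->
  #|edges_in E S| + #|colset N (edges_in E S) C| + 1 + ~~ cplt E S <= 'C(n.+2, 2).
Proof.
move=> HE; elim=> [|n IH] S cS HR.
  have [v Sv] : exists v, S = [set v] by apply/cards1P; rewrite cS.
  have E0 : edges_in E S = set0.
    apply/setP => e; rewrite !inE; apply/negP => /andP [eE es].
    by have := subset_leq_card es; rewrite HE // Sv cards1.
  have C0 : #|colset N (edges_in E S) C| = 0.
    apply/eqP; rewrite cards_eq0; apply/eqP/setP => i; rewrite !inE E0.
    by apply/existsP => -[e]; rewrite inE.
  have -> : cplt E S.
    apply/forallP => x; apply/implyP; rewrite Sv inE => /eqP ->.
    apply/forallP => y; apply/implyP; rewrite inE => /eqP ->; by rewrite eqxx.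
  by rewrite C0 E0 cards0.
have [u uS Hu] := L_sel N HE HR (ltac:(by rewrite cS) : 0 < #|S|).
have cS' : #|S :\ u| = n.+1 by move: cS; rewrite (cardsD1 u S) uS add1n => -[].
have HR' : forall T : {set V}, T \subset S :\ u -> ~~ rainbow_triangle E C T.
  move=> T sT; apply: HR; apply: subset_trans sT _; exact: subsetDl.
have IH' := IH _ cS' HR'.
have Le := L_edges HE uS.
have Lc := L_cols E C N S u.
rewrite cS in Hu.
have Hb : 'C(n.+3, 2) = 'C(n.+2, 2) + n.+2 by rewrite binS bin1.
have nbS := subset_leq_card (nb_sub E S u).
rewrite Hb.
case Hc' : (cplt E (S :\ u)); last first.
  move: IH'; rewrite Hc' /= Lc; move: Le Hu nbS; clear; case: (~~ cplt E S) => /=; lia.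
have Hp := L_priv1 N HE HR uS Hc'.
move: IH'; rewrite Hc' /= addn0 => IH'.
case: (eqVneq #|nb E S u| n.+1) => Hn; last first.
  have Hn' : #|nb E S u| <= n by rewrite -ltnS ltn_neqAle Hn -cS' nbS.
  rewrite Lc; move: IH' Le Hu Hp Hn'; clear; case: (~~ cplt E S) => /=; lia.
have -> : cplt E S.
  have nbE : nb E S u = S :\ u.
    apply/eqP; rewrite eqEcard nb_sub Hn cS' leqnn //.
  apply/forallP => x; apply/implyP => xS; apply/forallP => y; apply/implyP => yS.
  apply/implyP => xy.
  case: (eqVneq x u) => [xu | xu].
    have : y \in nb E S u by rewrite nbE !inE yS andbT -xu eq_sym.
    by rewrite inE xu => /andP [_ /andP [_ ->]].
  case: (eqVneq y u) => [yu | yu].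
    have : x \in nb E S u by rewrite nbE !inE xS andbT -yu.
    by rewrite inE yu setUC => /andP [_ /andP [_ ->]].
  move/forallP/(_ x)/implyP: Hc'; rewrite !inE xu xS => /(_ isT).
  by move/forallP/(_ y)/implyP; rewrite !inE yu yS => /(_ isT) /implyP /(_ xy).
rewrite /= Lc; move: IH' Le Hu Hp; clear; move: ('C(n.+2, 2)) => K; move: (#|nb E S u|) => a; move: (#|priv E C N S u|) => b; move: (#|edges_in E S|) => c; move: (#|edges_in E (S :\ u)|) => d; move: (#|colset N (edges_in E (S :\ u)) C|) => f; lia.
Qed.

Lemma tri_edge (V : finType) (E : {set {set V}}) (T : {set V}) x y :
  is_triangle E T -> x \in T -> y \in T -> x != y -> [set x; y] \in E.
Proof.
case/andP => _ /forallP H xT yT xy.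
by move/implyP: (H x) => /(_ xT) /forallP /(_ y) /implyP /(_ yT) /implyP /(_ xy).
Qed.

Lemma tri_inv (V : finType) (E : {set {set V}}) (T : {set V}) :
  is_triangle E T -> exists a b c,
  [/\ a != b, a != c, b != c, T = [set a; b; c] &
    [/\ [set a; b] \in E, [set a; c] \in E & [set b; c] \in E]].
Proof.
move=> HT; have := HT; case/andP => /eqP /card3_tri [a [b [c [ab ac bc Ta]]]] _.
exists a, b, c; split => //.
have aT : a \in T by rewrite Ta !inE eqxx.
have bT : b \in T by rewrite Ta !inE eqxx orbT.
have cT : c \in T by rewrite Ta !inE eqxx !orbT.
by split; apply: (tri_edge HT).
Qed.

Lemma pair_sub (V : finType) (T : {set V}) p q :
  p \in T -> q \in T -> [set p; q] \subset T.
Proof. by move=> pT qT; apply/subsetP => x; rewrite !inE => /orP [] /eqP ->. Qed.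

Lemma claimA_top (V : finType) (E : {set {set V}}) (C : {set V} -> nat) N :
  simple_graph E -> 0 < #|V| -> (forall e, e \in E -> C e < N) ->
  (forall T : {set V}, ~~ rainbow_triangle E C T) ->
  num_edges E + num_colors E C + 1 + ~~ cplt E setT <= 'C(#|V|.+1, 2).
Proof.
move=> HE V0 HN HR.
have cT : #|[set: V]| = (#|V|.-1).+1 by rewrite cardsT prednK.
have := claimA N HE cT (fun T _ => HR T).
have -> : edges_in E setT = E.
  by apply/setP => e; rewrite inE subsetT andbT.
by rewrite -(num_colorsE HN) prednK.
Qed.

Lemma cplt_complete (V : finType) (E : {set {set V}}) :
  cplt E setT -> complete_graph E.
Proof.
move=> /forallP H x y xy.
by move/implyP: (H x) => /(_ (in_setT x)) /forallP /(_ y) /implyP /(_ (in_setT y)) /implyP /(_ xy).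
Qed.

Unset Implicit Arguments.
Theorem lemma6 (V : finType) (E : {set {set V}}) (C : {set V} -> nat) :
  simple_graph E ->
  3 <= #|V| ->
  'C(#|V|.+1, 2) <= num_edges E + num_colors E C ->
  #|rainbow_triangles E C| = 1 ->
  num_edges E + num_colors E C = 'C(#|V|.+1, 2) /\ complete_graph E.
Proof.
move=> HE n3 Hf H1.
have V0 : 0 < #|V| by apply: leq_trans n3.
pose N := \max_(e in E) (C e).+1.
have HN : forall e, e \in E -> C e < N.
  move=> e eE; rewrite /N. apply: (@leq_bigmax_cond _ (fun e => e \in E) (fun e => (C e).+1) e eE).
have [T0 HT0] : exists T0, rainbow_triangles E C = [set T0] by apply/cards1P; rewrite H1.
have rbT : forall T, rainbow_triangle E C T -> T = T0.
  by move=> T RT; apply/set1P; rewrite -HT0 inE.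
have RT0 : rainbow_triangle E C T0 by have := set11 T0; rewrite -HT0 inE.
have ITT0 : is_triangle E T0 by case/andP: RT0.
have [x [y [z [xy xz yz T0E [Exy Exz Eyz]]]]] := tri_inv ITT0.
move: RT0; rewrite T0E rainbow_tri // => /and3P [cxy_xz cxy_yz cxz_yz].
have xT0 : x \in T0 by rewrite T0E !inE eqxx.
have yT0 : y \in T0 by rewrite T0E !inE eqxx orbT.
have zT0 : z \in T0 by rewrite T0E !inE eqxx !orbT.
case Hex : [exists e in E, (e != [set x; y]) && (C e == C [set x; y])].
  exfalso.
  case/existsP: Hex => e' /and3P [e'E e'xy /eqP Ce'].
  pose E' := E :\ [set x; y].
  have HE' : simple_graph E' by move=> e; rewrite inE => /andP [_ /HE].
  have sE' : forall e, e \in E' -> e \in E by move=> e; rewrite inE => /andP [_].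
  have HR' : forall T, ~~ rainbow_triangle E' C T.
    move=> T; apply/negP => RT.
    have IT : is_triangle E' T by case/andP: RT.
    have [a [b [c [ab ac bc Ta [Eab Eac Ebc]]]]] := tri_inv IT.
    have RTE : rainbow_triangle E C T.
      by move: RT; rewrite Ta !rainbow_tri // ?sE'.
    have TT0 := rbT _ RTE.
    have := tri_edge IT; rewrite TT0 => /(_ x y xT0 yT0 xy).
    by rewrite !inE eqxx.
  have HN' : forall e, e \in E' -> C e < N by move=> e /sE'; apply: HN.
  have := claimA_top HE' V0 HN' HR'.
  have -> : cplt E' setT = false.
    apply/negP => /cplt_complete /(_ x y xy); rewrite !inE eqxx //.
  have -> : num_colors E' C = num_colors E C.
    rewrite (num_colorsE HN') (num_colorsE HN); apply: eq_card => i.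
    rewrite !inE; apply/existsP/existsP => [[e /andP [eE' Ce]] | [e /andP [eE Ce]]].
      by exists e; rewrite sE'.
    case: (eqVneq e [set x; y]) => [exy | nexy].
      exists e'; rewrite !inE e'E andbT; apply/andP; split; [exact: e'xy | by rewrite Ce' -exy].
    by exists e; rewrite !inE eE Ce !andbT; exact: nexy.
  have : num_edges E = (num_edges E').+1.
    by rewrite /num_edges (cardsD1 [set x; y] E) Exy.
  move=> HEq; move: Hf; rewrite HEq /=.
  move=> Hf' H; have := leq_trans H Hf'; rewrite addSn !addn1 ltnn //.
have Cuniq : forall e, e \in E -> e != [set x; y] -> C e != C [set x; y].
  move=> e eE ne; apply/negP => /eqP Ce; move: Hex.
  by have -> // : [exists e in E, (e != [set x; y]) && (C e == C [set x; y])];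
    apply/existsP; exists e; rewrite eE ne Ce eqxx.
pose C' := fun e : {set V} => if e == [set x; y] then C [set x; z] else C e.
have C'E : forall e, e != [set x; y] -> C' e = C e.
  by move=> e ne; rewrite /C' (negbTE ne).
have C'xy : C' [set x; y] = C [set x; z] by rewrite /C' eqxx.
have HN' : forall e, e \in E -> C' e < N.
  by move=> e eE; rewrite /C'; case: ifP => _; apply: HN.
have HR' : forall T, ~~ rainbow_triangle E C' T.
  move=> T; apply/negP => RT.
  have IT : is_triangle E T by case/andP: RT.
  case Hxy : ((x \in T) && (y \in T)).
    case/andP: Hxy => xT yT.
    have [w wT] : exists w, w \in T :\: [set x; y].
      apply/card_gt0P; rewrite cardsD.
      have : #|T :&: [set x; y]| <= 2.
        by apply: leq_trans (subset_leq_card (subsetIr _ _)) _; rewrite cards2 xy.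
      by case/andP: IT => /eqP -> _; case: #|_| => [|[|[|]]].
    move: wT; rewrite !inE negb_or => /andP [/andP [wx wy] wT].
    have Tw : T = [set x; y; w].
      apply/eqP; rewrite eq_sym eqEcard; apply/andP; split.
        by apply/subsetP => v; rewrite !inE => /orP [/orP []|] /eqP ->.
      case/andP: IT => /eqP -> _.
      by rewrite -setUA !cardsU1 cards1 !inE negb_or xy eq_sym wx eq_sym wy.
    have Exw : [set x; w] \in E by apply: (tri_edge IT) => //; rewrite eq_sym.
    have Eyw : [set y; w] \in E by apply: (tri_edge IT) => //; rewrite eq_sym.
    have xwne : [set x; w] != [set x; y].
      by apply: (@set_ne _ w); rewrite !inE ?eqxx ?orbT // negb_or wx.
    have ywne : [set y; w] != [set x; y].
      by apply: (@set_ne _ w); rewrite !inE ?eqxx ?orbT // negb_or wx.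
    move: RT; rewrite Tw rainbow_tri // 1?eq_sym // C'xy !C'E //.
    case: (eqVneq w z) => [wz | wz].
      by rewrite wz eqxx.
    have TneT0 : T != T0.
      rewrite eq_sym; apply: (@set_ne _ z) => //; rewrite Tw !inE !negb_or.
      by rewrite ![z == _]eq_sym xz yz wz.
    have : ~~ rainbow_triangle E C T by apply: contra TneT0 => /rbT ->.
    rewrite Tw rainbow_tri // 1?eq_sym // Cuniq // (eq_sym (C _)) Cuniq //= => /negPn /eqP ->.
    by rewrite eqxx !andbF.
  have C'T : forall p q, p \in T -> q \in T -> C' [set p; q] = C [set p; q].
    move=> p q pT qT; apply: C'E; apply/negP => /eqP pq.
    have := pair_sub pT qT; rewrite pq => /subsetP sub.
    by move: Hxy; rewrite !sub // !inE eqxx ?orbT.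
  have [a [b [c [ab ac bc Ta [Eab Eac Ebc]]]]] := tri_inv IT.
  have aT : a \in T by rewrite Ta !inE eqxx.
  have bT : b \in T by rewrite Ta !inE eqxx orbT.
  have cT : c \in T by rewrite Ta !inE eqxx !orbT.
  have RTE : rainbow_triangle E C T.
    by move: RT; rewrite Ta !rainbow_tri // !C'T.
  have TT0 := rbT _ RTE.
  by move: Hxy; rewrite TT0 xT0 yT0.
have := claimA_top HE V0 HN' HR'.
have HC : num_colors E C = (num_colors E C').+1.
  rewrite (num_colorsE HN') (num_colorsE HN).
  have -> : colset N E C' = colset N E C :\ Ordinal (HN _ Exy).
    apply/setP => i; rewrite !inE; apply/existsP/andP.
      case=> e /andP [eE /eqP Ce]; case: (eqVneq e [set x; y]) => [exy | nexy].
        split; last by apply/existsP; exists [set x; z]; rewrite Exz -Ce exy C'xy eqxx.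
        apply/negP => /eqP iE; have := congr1 val iE; rewrite /= -Ce exy C'xy => h.
        by move: cxy_xz; rewrite h eqxx.
      split; last (apply/existsP; exists e; by rewrite eE -(C'E _ nexy) Ce eqxx).
      apply/negP => /eqP iE; have := congr1 val iE; rewrite /= -Ce C'E // => h.
      by move: (Cuniq e eE nexy); rewrite h eqxx.
    case=> ne /existsP [e /andP [eE /eqP Ce]]; exists e; rewrite eE /=.
    have nexy : e != [set x; y].
      by apply: contra ne => /eqP exy; apply/eqP; apply: val_inj; rewrite /= -Ce exy.
    by rewrite C'E // Ce.
  by rewrite (cardsD1 (Ordinal (HN _ Exy))) (@col_mem _ _ _ _ [set x; y]) // add1n.
rewrite HC in Hf *.
move: Hf; case Hc : (cplt E setT) => /=.
  move=> Hf Hb; split; last exact: cplt_complete.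
  apply/eqP; rewrite eqn_leq Hf andbT; apply: leq_trans Hb; move: (num_edges E) (num_colors E C') => a b; clear -a b; lia.
move=> Hf Hb; exfalso.
have := leq_trans Hb Hf; move: (num_edges E) (num_colors E C') => a b H; clear -H; lia.
Qed.
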